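(* For every Noetherian commutative ring $R$, $\operatorname{nil}_\infty(R)=0$.
   Context: For a commutative ring $R$, the infinite nilradical is $\operatorname{nil}_\infty(R)=\bigcap_{\mathfrak p\in\operatorname{Spec}(R)}\bigcap_{n\in\mathbb{N}}\mathfrak p^n$. *)

(* Defs.v *)
From mathcomp Require Import all_boot all_algebra.
Set Implicit Arguments. Unset Strict Implicit. Unset Printing Implicit Defensive.
Import GRing.Theory.
Local Open Scope ring_scope.

Definition is_ideal (R : comPzRingType) (I : R -> Prop) : Prop :=
  [/\ I 0, (forall x y, I x -> I y -> I (x + y)) & (forall a x, I x -> I (a * x))].

Definition is_prime_ideal (R : comPzRingType) (P : R -> Prop) : Prop :=
  [/\ is_ideal P, ~ P 1 & (forall a b, P (a * b) -> P a \/ P b)].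

Definition ideal_mul (R : comPzRingType) (I J : R -> Prop) : R -> Prop :=
  fun x => exists s : seq (R * R),
    (forall pr, pr \in s -> I pr.1 /\ J pr.2) /\ x = \sum_(pr <- s) pr.1 * pr.2.

Fixpoint ideal_pow (R : comPzRingType) (I : R -> Prop) (n : nat) : R -> Prop :=
  match n with
  | 0 => fun _ => True
  | n'.+1 => ideal_mul (ideal_pow I n') I
  end.

Definition noetherian (R : comPzRingType) : Prop :=
  forall I : nat -> R -> Prop,
    (forall n, is_ideal (I n)) ->
    (forall n x, I n x -> I n.+1 x) ->
    exists N, forall n, (N <= n)%N -> forall x, I n x <-> I N x.

Definition nil_infty (R : comPzRingType) : R -> Prop :=
  fun x => forall P : R -> Prop, is_prime_ideal P -> forall n : nat, ideal_pow P n x.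

(* Main.v *)
Require Import Defs.
From mathcomp Require Import all_boot all_algebra.
From mathcomp Require Import ring zify.
From Stdlib Require Import Classical ClassicalEpsilon.
Set Implicit Arguments. Unset Strict Implicit.
Import GRing.Theory.
Local Open Scope ring_scope.

Section Aux.
Variable R : comPzRingType.

Fixpoint span (s : seq R) : R -> Prop :=
  match s with
  | [::] => fun y => y = 0
  | a :: s' => fun y => exists r w, span s' w /\ y = r * a + w
  end.

Fixpoint allP (P : R -> Prop) (s : seq R) : Prop :=
  match s with [::] => True | a :: s' => P a /\ allP P s' end.

Lemma span_ideal s : is_ideal (span s).
Proof.
elim: s => [|a s [H0 HD HM]] /=.
  split => [//|x y -> ->|c x ->]; by rewrite ?addr0 ?mulr0.
split.
- by exists 0, 0; split => //; rewrite mul0r addr0.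
- move=> x y [r1 [w1 [Hw1 ->]]] [r2 [w2 [Hw2 ->]]].
  exists (r1 + r2), (w1 + w2); split; [exact: HD|ring].
- move=> c x [r [w [Hw ->]]]; exists (c * r), (c * w); split; [exact: HM|ring].
Qed.

Lemma ideal_mul_sub (I J L : R -> Prop) y :
  is_ideal L -> (forall u v, I u -> J v -> L (u * v)) -> ideal_mul I J y -> L y.
Proof.
move=> [H0 HD HM] Huv [s [Hs ->]].
elim: s Hs => [|pr s IH] Hs; first by rewrite big_nil.
rewrite big_cons; apply: (HD).
  by have [] := Hs pr (mem_head _ _); apply: Huv.
by apply: IH => q Hq; apply: Hs; rewrite in_cons Hq orbT.
Qed.

Lemma ideal_mul1 (I J : R -> Prop) u v : I u -> J v -> ideal_mul I J (u * v).
Proof.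
move=> Iu Jv; exists [:: (u, v)]; split; last by rewrite big_seq1.
by move=> pr; rewrite inE => /eqP ->.
Qed.

Lemma ideal_pow_mono (I J : R -> Prop) n y :
  (forall z, I z -> J z) -> ideal_pow I n y -> ideal_pow J n y.
Proof.
move=> HIJ; elim: n y => [//|n IH] y /= [s [Hs ->]].
exists s; split => // pr Hpr; have [H1 H2] := Hs pr Hpr; split; auto.
Qed.

Lemma mul_ideal (K : R -> Prop) c : is_ideal K -> is_ideal (fun y => K (c * y)).
Proof.
move=> [H0 HD HM]; split.
- by rewrite mulr0.
- by move=> x y Hx Hy; rewrite mulrDr; apply: (HD).
- by move=> a x Hx; rewrite mulrCA; apply: (HM).
Qed.

Lemma pow_in (K : R -> Prop) a k i : is_ideal K -> K (a ^+ k) -> (k <= i)%N -> K (a ^+ i).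
Proof.
move=> [_ _ HM] Hk Hki; rewrite -(subnK Hki) exprD; exact: HM.
Qed.

Lemma step (K : R -> Prop) a s k m : is_ideal K -> K (a ^+ k) ->
  (forall j z, (m <= j)%N -> ideal_pow (span s) j z -> K z) ->
  forall n y, ideal_pow (span (a :: s)) n y -> forall i j z, ideal_pow (span s) j z ->
    (k + m <= i + j + n.+1)%N -> K (a ^+ i * z * y).
Proof.
move=> HK Hk HJ; have [H0 HD HM] := HK.
elim => [|n IH] y Hy i j z Hz Hle.
  case: (leqP k i) => Hki.
    rewrite -mulrA mulrC; apply: (HM); exact: pow_in Hki.
  have Hmj : (m <= j)%N by rewrite addn1 in Hle; lia.
  by rewrite mulrC mulrA; apply: (HM); apply: (HJ) Hz.
move: Hy => /= Hy; have Hsub := ideal_mul_sub (@mul_ideal K (a ^+ i * z) HK) _ Hy; apply: Hsub.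
move=> u v Hu [r [w [Hw ->]]].
have -> : a ^+ i * z * (u * (r * a + w)) =
          r * (a ^+ i.+1 * z * u) + a ^+ i * (z * w) * u by rewrite exprS; ring.
apply: (HD).
  apply: (HM); apply: (IH u Hu i.+1 j z Hz); lia.
apply: (IH u Hu i j.+1 (z * w)).
  by apply: (ideal_mul1 (I := ideal_pow (span s) j)).
lia.
Qed.

Lemma fg_pow (K : R -> Prop) s : is_ideal K -> allP (fun g => exists k, K (g ^+ k)) s ->
  exists N, forall n y, (N <= n)%N -> ideal_pow (span s) n y -> K y.
Proof.
move=> HK; have [H0 HD HM] := HK.
elim: s => [|a s IH] /=.
  move=> _; exists 1%N => [[|n]] // y _ /= Hy.
  by apply: (ideal_mul_sub HK _ Hy) => u v _ ->; rewrite mulr0.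
move=> [[k Hk] /IH [m Hm]]; exists (k + m)%N => n y Hn Hy.
have := step HK Hk Hm Hy (z := 1) (i := 0) (j := 0) I.
by rewrite expr0 !mul1r; apply; lia.
Qed.

Lemma noeth_max (F : (R -> Prop) -> Prop) I0 : noetherian R ->
  (forall I, F I -> is_ideal I) -> F I0 ->
  exists K, F K /\ forall L, F L -> (forall y, K y -> L y) -> forall y, L y -> K y.
Proof.
move=> HN HF F0; apply: NNPP => H.
have H1 : forall K, exists L, F K -> F L /\ (forall y, K y -> L y) /\ exists y, L y /\ ~ K y.
  move=> K; case: (classic (F K)) => FK; last by exists K.
  apply: NNPP => HK; apply: H; exists K; split => // L FL KL y Ly.
  apply: NNPP => nKy; apply: HK; exists L => _; split => //; split => //; by exists y.
pose g K := proj1_sig (constructive_indefinite_description _ (H1 K)).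
have Hg K : F K -> F (g K) /\ (forall y, K y -> g K y) /\ exists y, g K y /\ ~ K y.
  exact: (proj2_sig (constructive_indefinite_description _ (H1 K))).
pose c := fix c n := if n is n'.+1 then g (c n') else I0.
have Fc n : F (c n) by elim: n => //= n IH; have [] := Hg _ IH.
have [N HNc] := HN c (fun n => HF _ (Fc n)) (fun n => proj1 (proj2 (Hg _ (Fc n)))).
have [_ [_ [y [Hy1 Hy2]]]] := Hg _ (Fc N).
by apply: Hy2; apply/(HNc N.+1 (leqnSn N)).
Qed.

Lemma noeth_fg (Q : R -> Prop) : noetherian R -> is_ideal Q ->
  exists s, allP Q s /\ forall y, Q y -> span s y.
Proof.
move=> HN HQ; apply: NNPP => H.
have H1 : forall s, exists y, allP Q s -> Q y /\ ~ span s y.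
  move=> s; case: (classic (allP Q s)) => Hs; last by exists 0.
  apply: NNPP => HH; apply: H; exists s; split => // y Qy.
  apply: NNPP => ns; apply: HH; by exists y.
pose f s := proj1_sig (constructive_indefinite_description _ (H1 s)).
have Hf s : allP Q s -> Q (f s) /\ ~ span s (f s).
  exact: (proj2_sig (constructive_indefinite_description _ (H1 s))).
pose c := fix c n := if n is n'.+1 then f (c n') :: c n' else [::].
have Qc n : allP Q (c n) by elim: n => //= n IH; split => //; have [] := Hf _ IH.
have Hinc n x : span (c n) x -> span (c n.+1) x.
  by move=> Hx /=; exists 0, x; split => //; rewrite mul0r add0r.
have [N HNc] := HN (fun n => span (c n)) (fun n => span_ideal _) Hinc.
have [_ Hn] := Hf _ (Qc N); apply: Hn.
apply/(HNc N.+1 (leqnSn N)) => /=; exists 1, 0; split; first by case: (span_ideal (c N)).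
by rewrite mul1r addr0.
Qed.

Lemma allP_imp (P P' : R -> Prop) s : (forall y, P y -> P' y) -> allP P s -> allP P' s.
Proof. by move=> H; elim: s => //= a s IH [? ?]; split; auto. Qed.

End Aux.

Theorem proposition4p5 (R : comPzRingType) :
  noetherian R -> forall x : R, nil_infty x -> x = 0.
Proof.
move=> HN x Hx; apply: NNPP => x0.
have F0 : (fun I : R -> Prop => is_ideal I /\ ~ I x) (fun y => y = 0).
  split => //; split => //; [by move=> ? ? -> ->; rewrite addr0 | by move=> ? ? ->; rewrite mulr0].
have [K [[HK nKx] Kmax]] := @noeth_max R (fun I => is_ideal I /\ ~ I x) _ HN (fun I H => proj1 H) F0.
have [K0 KD KM] := HK.
have addb b : ~ K b -> exists z r, K z /\ x = z + r * b.
  move=> nKb; pose L y := exists z r, K z /\ y = z + r * b.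
  have HL : is_ideal L.
    split; first by exists 0, 0; split => //; rewrite mul0r addr0.
    - move=> u v [z1 [r1 [H1 ->]]] [z2 [r2 [H2 ->]]]; exists (z1 + z2), (r1 + r2).
      split; [exact: KD | ring].
    - move=> c u [z [r [H ->]]]; exists (c * z), (c * r); split; [exact: KM | ring].
  apply: NNPP => nLx; apply: nKb; apply: (Kmax L) => //.
    by move=> y Ky; exists y, 0; split => //; rewrite mul0r addr0.
  by exists 0, 1; split => //; rewrite mul1r add0r.
pose Q a := K (a * x).
have HQ : is_ideal Q.
  split; rewrite /Q.
  - by rewrite mul0r.
  - by move=> a b Ha Hb; rewrite mulrDl; apply: (KD).
  - by move=> c a Ha; rewrite -mulrA; apply: (KM).
have PQ : is_prime_ideal Q.
  split; first exact: HQ.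
    by rewrite /Q mul1r.
  idtac.
  move=> a b Hab; case: (classic (Q a)) => Ha; [by left | right].
  have [z [r [Kz Ex]]] := addb _ Ha.
  rewrite /Q Ex.
  have -> : b * (z + r * (a * x)) = b * z + r * ((a * b) * x) by ring.
  by apply: (KD); apply: (KM).
have Hpow a : Q a -> exists k, K (a ^+ k).
  move=> Qa; pose C k r := K (r * a ^+ k).
  have HC k : is_ideal (C k).
    split; rewrite /C.
    - by rewrite mul0r.
    - by move=> u v Hu Hv; rewrite mulrDl; apply: (KD).
    - by move=> c u Hu; rewrite -mulrA; apply: (KM).
  have Cinc k r : C k r -> C k.+1 r.
    by move=> H; rewrite /C exprS mulrCA; apply: (KM).
  have [N HNc] := HN C HC Cinc; exists N; apply: NNPP => nK.
  have [z [r [Kz Ex]]] := addb _ nK.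
  have Cr : C N.+1 r.
    rewrite /C.
    have -> : r * a ^+ N.+1 = a * x + (-1) * (a * z) by rewrite Ex exprS; ring.
    by apply: (KD) => //; apply: (KM); apply: (KM).
  have /(HNc N.+1 (leqnSn N)) CN := Cr.
  by apply: nKx; rewrite Ex; apply: (KD).
have [s [Qs Hs]] := noeth_fg HN HQ.
have [N HNs] := fg_pow HK (allP_imp Hpow Qs).
apply: nKx; apply: (HNs N) => //.
exact: (ideal_pow_mono Hs (Hx Q PQ N)).
Qed.
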